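(* (i) For integers $k\geq 2$ and $n\geq 2k^2+3$, $\rho(N_{n,n}^{k-2,1})>\rho(M_{n,n}^{n-k,2})$. (ii) For integers $k\geq 2$ and $n\geq k+1$, $q(M_{n,n}^{n-k,2})>q(N_{n,n}^{k-2,1})$.
   Context: $\rho$ denotes the largest eigenvalue of the adjacency matrix and $q$ the largest eigenvalue of $D+A$ (diagonal degree matrix plus adjacency matrix). $M_{n,m}^{s,t}$: bipartite graph with parts $X=X_1\cup X_2$, $Y=Y_1\cup Y_2$, $|X_1|=s$, $|X_2|=n-s$, $|Y_1|=m-t$, $|Y_2|=t$; edges are all pairs between $X_1$ and $Y_1$, between $X_2$ and $Y_1$, and between $X_2$ and $Y_2$. $N_{n,n}^{q',1}$ (here $q'=k-2$): parts $X=X_1\cup X_2\cup X_3$, $Y=Y_1\cup Y_2\cup Y_3$, $|X_1|=|Y_1|=n-q'-2$, $|X_2|=|Y_2|=q'+1$, $|X_3|=|Y_3|=1$; edges are all pairs between $X_i$ and $Y_i$ ($i=1,2,3$), between $X_1$ and $Y_2$, between $X_2$ and $Y_1\cup Y_3$, and between $X_3$ and $Y_2$. *)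

(* Defs.v *)
From HB Require Import structures.
From mathcomp Require Import all_boot all_order all_algebra.
From mathcomp Require Import reals.
Set Implicit Arguments. Unset Strict Implicit. Unset Printing Implicit Defensive.
Import Order.TTheory GRing.Theory Num.Theory.
Local Open Scope ring_scope.

(* A bipartite graph with parts X = 'I_n and Y = 'I_m, given by the relation
   e x y (x in X adjacent to y in Y).  Vertices of the whole graph are
   'I_(n + m): the first n are X, the last m are Y. *)
Definition bip_adj (R : nzRingType) (n m : nat) (e : 'I_n -> 'I_m -> bool)
  : 'M[R]_(n + m) :=
  \matrix_(i, j)
    match split i, split j with
    | inl x, inr y => (e x y)%:R
    | inr y, inl x => (e x y)%:R
    | _, _ => 0
    end.

Definition deg_mx (R : nzRingType) (p : nat) (A : 'M[R]_p) : 'M[R]_p :=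
  diag_mx (\row_i \sum_j A i j).

Definition signless_lap (R : nzRingType) (p : nat) (A : 'M[R]_p) : 'M[R]_p :=
  deg_mx A + A.

Definition largest_eigenvalue (R : realType) (p : nat) (A : 'M[R]_p) (lam : R)
  : Prop :=
  eigenvalue A lam /\ (forall mu, eigenvalue A mu -> mu <= lam).

(* M_{n,m}^{s,t}: X = X1 u X2, |X1| = s (indices x < s), |X2| = n - s;
   Y = Y1 u Y2, |Y1| = m - t (indices y < m - t), |Y2| = t.
   Edges: X1-Y1, X2-Y1, X2-Y2. *)
Definition M_edge (n m s t : nat) (x : 'I_n) (y : 'I_m) : bool :=
  let inX1 := (x < s)%N in
  let inY1 := (y < m - t)%N in
  [|| inX1 && inY1, (~~ inX1) && inY1 | (~~ inX1) && (~~ inY1)].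

Definition M_graph (R : nzRingType) (n m s t : nat) : 'M[R]_(n + m) :=
  bip_adj R (@M_edge n m s t).

(* N_{n,n}^{q,1}: X = X1 u X2 u X3, |X1| = n - q - 2, |X2| = q + 1, |X3| = 1,
   and likewise for Y (part index 1, 2, 3 by position).
   Edges: Xi-Yi (i = 1,2,3), X1-Y2, X2-Y1, X2-Y3, X3-Y2. *)
Definition N_part (n q : nat) (i : nat) : nat :=
  if (i < n - q - 2)%N then 1%N else if (i < n - 1)%N then 2%N else 3%N.

Definition N_edge (n q : nat) (x y : 'I_n) : bool :=
  let a := N_part n q x in
  let b := N_part n q y in
  [|| (a == 1) && (b == 1)%N, (a == 2) && (b == 2)%N, (a == 3) && (b == 3)%N,
      (a == 1) && (b == 2)%N, (a == 2) && (b == 1)%N,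
      (a == 2) && (b == 3)%N | (a == 3) && (b == 2)%N].

Definition N_graph (R : nzRingType) (n q : nat) : 'M[R]_(n + n) :=
  bip_adj R (@N_edge n q).

(* Main.v *)
Require Import Defs.
From HB Require Import structures.
From mathcomp Require Import all_boot all_order all_algebra.
From mathcomp Require Import reals.
From mathcomp Require Import boolp classical_sets topology normedtype derive.
From mathcomp Require Import ring lra zify.
Import Order.TTheory GRing.Theory Num.Theory.
Import numFieldNormedType.Exports.
Local Open Scope ring_scope.

Section Bip.
Variable R : realType.

Definition bvec {n m} (fx : 'I_n -> R) (fy : 'I_m -> R) : 'rV[R]_(n + m) :=
  \row_i match split i with inl x => fx x | inr y => fy y end.

Lemma split_l n m (x : 'I_n) : split (lshift m x) = inl x.
Proof. exact: (unsplitK (inl x)). Qed.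
Lemma split_r n m (y : 'I_m) : split (rshift n y) = inr y.
Proof. exact: (unsplitK (inr y)). Qed.

Lemma bipX {n m} e (fx : 'I_n -> R) fy (x : 'I_n) :
  (bvec fx fy *m bip_adj R e) 0 (lshift m x) = \sum_y fy y * (e x y)%:R.
Proof.
rewrite !mxE big_split_ord /= big1 ?add0r.
  by apply: eq_bigr => y _; rewrite !mxE !split_l !split_r.
by move=> i _; rewrite !mxE !split_l mulr0.
Qed.

Lemma bipY {n m} e (fx : 'I_n -> R) fy (y : 'I_m) :
  (bvec fx fy *m bip_adj R e) 0 (rshift n y) = \sum_x fx x * (e x y)%:R.
Proof.
rewrite !mxE big_split_ord /= [X in _ + X]big1 ?addr0.
  by apply: eq_bigr => x _; rewrite !mxE !split_l !split_r.
by move=> i _; rewrite !mxE !split_r mulr0.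
Qed.

Lemma rowsumX {n m} e (x : 'I_n) :
  \sum_j (bip_adj R e) (lshift m x) j = \sum_y (e x y)%:R.
Proof.
rewrite big_split_ord /= big1 ?add0r.
  by apply: eq_bigr => y _; rewrite !mxE !split_l !split_r.
by move=> i _; rewrite !mxE !split_l.
Qed.

Lemma rowsumY {n m} e (y : 'I_m) :
  \sum_j (bip_adj R e) (rshift n y) j = \sum_x (e x y)%:R.
Proof.
rewrite big_split_ord /= [X in _ + X]big1 ?addr0.
  by apply: eq_bigr => x _; rewrite !mxE !split_l !split_r.
by move=> i _; rewrite !mxE !split_r.
Qed.

Lemma mul_deg p (w : 'rV[R]_p) (A : 'M[R]_p) j :
  (w *m deg_mx A) 0 j = w 0 j * \sum_l A j l.
Proof. by rewrite /deg_mx mul_mx_diag !mxE. Qed.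

Lemma bvecX {n m} (fx : 'I_n -> R) (fy : 'I_m -> R) x : bvec fx fy 0 (lshift m x) = fx x.
Proof. by rewrite mxE split_l. Qed.
Lemma bvecY {n m} (fx : 'I_n -> R) (fy : 'I_m -> R) y : bvec fx fy 0 (rshift n y) = fy y.
Proof. by rewrite mxE split_r. Qed.

Lemma bip_sym {n m} e i j : bip_adj R e i j = (bip_adj R e : 'M_(n + m)) j i.
Proof. by rewrite !mxE; case: (split i); case: (split j). Qed.

Lemma bip_ge0 {n m} e i j : 0 <= (bip_adj R e : 'M_(n + m)) i j.
Proof. by rewrite !mxE; case: (split i); case: (split j) => // *; rewrite ler0n. Qed.

Lemma lap_sym p (A : 'M[R]_p) : (forall i j, A i j = A j i) ->
  forall i j, signless_lap A i j = signless_lap A j i.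
Proof.
move=> As i j; rewrite /signless_lap /deg_mx !mxE As; congr (_ + _).
by case: (eqVneq i j) => [->|/negbTE h]; rewrite ?eqxx // h eq_sym h.
Qed.

Lemma lap_ge0 p (A : 'M[R]_p) : (forall i j, 0 <= A i j) ->
  forall i j, 0 <= signless_lap A i j.
Proof.
move=> Ap i j; rewrite /signless_lap /deg_mx !mxE addr_ge0 //.
by rewrite mulrn_wge0 // sumr_ge0.
Qed.

Lemma sum_ord2 n a (F : 'I_n -> R) c1 c2 : (a <= n)%N ->
  (forall y : 'I_n, (y < a)%N -> F y = c1) ->
  (forall y : 'I_n, (a <= y)%N -> F y = c2) ->
  \sum_y F y = a%:R * c1 + (n - a)%:R * c2.
Proof.
move=> an H1 H2.
pose G := fun i : nat => if (i < a)%N then c1 else c2.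
have -> : \sum_y F y = \sum_(y < n) G y.
  by apply: eq_bigr => y _; rewrite /G; case: ltnP => h; [apply: H1|apply: H2].
rewrite -(big_mkord xpredT G).
rewrite (@big_cat_nat R 0 +%R a 0 n xpredT G (leq0n a) an).
rewrite (@eq_big_nat R 0 +%R 0 a G (fun _ => c1)); last by move=> i /andP[_ h]; rewrite /G h.
rewrite (@eq_big_nat R 0 +%R a n G (fun _ => c2)); last first.
  by move=> i /andP[h _]; rewrite /G ltnNge h.
by rewrite !sumr_const_nat subn0 !mulr_natl.
Qed.

Lemma sum_ord3 n a b (F : 'I_n -> R) c1 c2 c3 : (a <= b)%N -> (b <= n)%N ->
  (forall y : 'I_n, (y < a)%N -> F y = c1) ->
  (forall y : 'I_n, (a <= y)%N -> (y < b)%N -> F y = c2) ->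
  (forall y : 'I_n, (b <= y)%N -> F y = c3) ->
  \sum_y F y = a%:R * c1 + (b - a)%:R * c2 + (n - b)%:R * c3.
Proof.
move=> ab bn H1 H2 H3.
pose G := fun i : nat => if (i < a)%N then c1 else if (i < b)%N then c2 else c3.
have -> : \sum_y F y = \sum_(y < n) G y.
  apply: eq_bigr => y _; rewrite /G; case: ltnP => h; first by apply: H1.
  by case: ltnP => h'; [apply: H2|apply: H3].
rewrite -(big_mkord xpredT G).
have an := leq_trans ab bn.
rewrite (@big_cat_nat R 0 +%R a 0 n xpredT G (leq0n a) an).
rewrite (@big_cat_nat R 0 +%R b a n xpredT G ab bn).
rewrite (@eq_big_nat R 0 +%R 0 a G (fun _ => c1)); last by move=> i /andP[_ h]; rewrite /G h.
rewrite (@eq_big_nat R 0 +%R a b G (fun _ => c2)); last first.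
  by move=> i /andP[h h']; rewrite /G ltnNge h h'.
rewrite (@eq_big_nat R 0 +%R b n G (fun _ => c3)); last first.
  move=> i /andP[h _]; rewrite /G ifF; last first.
    by apply/negbTE; rewrite -leqNgt (leq_trans ab h).
  by rewrite ltnNge h.
rewrite !sumr_const_nat subn0 !mulr_natl; exact: addrA.
Qed.


Lemma bip_eigvec n m (e : 'I_n -> 'I_m -> bool) (fx : 'I_n -> R) (fy : 'I_m -> R) lam :
  (forall x, \sum_y fy y * (e x y)%:R = lam * fx x) ->
  (forall y, \sum_x fx x * (e x y)%:R = lam * fy y) ->
  bvec fx fy *m bip_adj R e = lam *: bvec fx fy.
Proof.
move=> HX HY; apply/rowP => i; rewrite -(splitK i); case: (split i) => [x|y] /=.
  by rewrite bipX mxE bvecX HX.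
by rewrite bipY mxE bvecY HY.
Qed.

Lemma lap_eigvec n m (e : 'I_n -> 'I_m -> bool) (fx : 'I_n -> R) (fy : 'I_m -> R) lam :
  (forall x, fx x * \sum_y (e x y)%:R + \sum_y fy y * (e x y)%:R = lam * fx x) ->
  (forall y, fy y * \sum_x (e x y)%:R + \sum_x fx x * (e x y)%:R = lam * fy y) ->
  bvec fx fy *m signless_lap (bip_adj R e) = lam *: bvec fx fy.
Proof.
move=> HX HY; apply/rowP => i; rewrite /signless_lap mulmxDr.
rewrite -(splitK i); case: (split i) => [x|y] /=.
  by rewrite mxE mul_deg bipX rowsumX !mxE !split_l HX.
by rewrite mxE mul_deg bipY rowsumY !mxE !split_r HY.
Qed.

Lemma bvec_pos n m (fx : 'I_n -> R) (fy : 'I_m -> R) :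
  (forall x, 0 < fx x) -> (forall y, 0 < fy y) -> forall i, 0 < bvec fx fy 0 i.
Proof.
move=> HX HY i; rewrite -(splitK i); case: (split i) => [x|y] /=.
  by rewrite bvecX.
by rewrite bvecY.
Qed.

Lemma perron (p : nat) (A : 'M[R]_p) (w : 'rV[R]_p) (lam : R) (i0 : 'I_p) :
  (forall i j, A i j = A j i) -> (forall i j, 0 <= A i j) ->
  (forall i, 0 < w 0 i) -> w *m A = lam *: w -> largest_eigenvalue A lam.
Proof.
move=> Asym Apos wpos wA; split.
  apply/eigenvalueP; exists w => //.
  apply/eqP => /rowP /(_ i0); rewrite mxE => w0.
  by have := wpos i0; rewrite w0 ltxx.
move=> mu /eigenvalueP [v vA vn0].
have ej j : mu * v 0 j = \sum_i v 0 i * A i j.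
  by have := congr1 (fun M : 'M[R]_(1,p) => M 0 j) vA; rewrite !mxE => <-.
have ej' j : lam * w 0 j = \sum_i w 0 i * A i j.
  by have := congr1 (fun M : 'M[R]_(1,p) => M 0 j) wA; rewrite !mxE => <-.
set S := \sum_j `|v 0 j| * w 0 j.
have Spos : 0 < S.
  have [j vj] : exists j, v 0 j != 0.
    apply/existsP; apply: contraNT vn0 => /existsPn H.
    by apply/eqP/rowP => j; rewrite mxE; apply/eqP/negPn/H.
  rewrite /S (bigD1 j) //= ltr_pwDl //.
    by rewrite mulr_gt0 ?normr_gt0.
  by rewrite sumr_ge0 // => i _; rewrite mulr_ge0 // ltW.
have H1 : `|mu| * S <= lam * S.
  rewrite /S mulr_sumr.
  apply: (@le_trans _ _ (\sum_j (\sum_i `|v 0 i| * A i j) * w 0 j)).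
    apply: ler_sum => j _; rewrite mulrA -normrM ej ler_wpM2r ?(ltW (wpos j)) //.
    apply: (le_trans (ler_norm_sum _ _ _)); apply: ler_sum => i _.
    by rewrite normrM (ger0_norm (Apos i j)).
  rewrite (eq_bigr (fun j => \sum_i `|v 0 i| * A i j * w 0 j)); last first.
    by move=> j _; rewrite mulr_suml.
  rewrite exchange_big /= mulr_sumr; apply: ler_sum => i _.
  rewrite (eq_bigr (fun j => `|v 0 i| * (w 0 j * A j i))); last first.
    by move=> j _; rewrite Asym; ring.
  by rewrite -mulr_sumr -ej'; rewrite le_eqVlt; apply/orP; left; apply/eqP; ring.
have : `|mu| <= lam by rewrite -(ler_pM2r Spos).
by apply: le_trans; apply: ler_norm.
Qed.

End Bip.
Arguments bvec {R n m} fx fy.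

Section G4.
Variable R : realType.


Lemma M_adj_eig (n k : nat) (r : R) : (2 <= k)%N -> (k < n)%N ->
  let t := r ^+ 2 in let A := (n - k)%:R * (n - 2)%:R in
  (t - A) * (t - 2 * k%:R) = k%:R * (n - 2)%:R * t -> 0 < r -> A < t ->
  largest_eigenvalue (M_graph R n n (n - k) 2) r.
Proof.
move=> k2 kn t A ht r0 At.
have n2 : (2 <= n)%N by apply: leq_trans k2 (ltnW kn).
have nk : (n - k <= n)%N := leq_subr k n.
have nn2 : (n - 2 <= n)%N := leq_subr 2 n.
have n2pos : 0 < (n - 2)%:R :> R by rewrite ltr0n subn_gt0 (leq_ltn_trans k2 kn).
have kpos : 0 < k%:R :> R by rewrite ltr0n (leq_trans _ k2).
set fx := fun x : 'I_n => if (x < n - k)%N then k%:R * (n - 2)%:R * r else (t - A) * r.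
set fy := fun y : 'I_n => if (y < n - 2)%N then k%:R * t else k%:R * (t - A).
apply: (@perron R _ _ (bvec fx fy) _ (lshift n (Ordinal (leq_ltn_trans (leq0n k) kn)))).
- exact: bip_sym.
- exact: bip_ge0.
- move=> i; rewrite -(splitK i); case: (split i) => [x|y] /=.
    rewrite bvecX /fx; case: ifP => _; rewrite mulr_gt0 ?mulr_gt0 //.
    by rewrite subr_gt0.
  rewrite bvecY /fy; case: ifP => _; rewrite mulr_gt0 //.
    by rewrite (lt_trans _ At) // mulr_gt0 // ltr0n subn_gt0.
  by rewrite subr_gt0.
apply/rowP => i; rewrite -(splitK i); case: (split i) => [x|y] /=.
  rewrite bipX mxE bvecX /fx.
  case: ifP => hx.
    rewrite (@sum_ord2 R n (n - 2) _ (k%:R * t) 0) //.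
    + by rewrite /t mulr0 addr0; ring.
    + by move=> y hy; rewrite /fy /M_edge hx hy /= mulr1.
    + by move=> y hy; rewrite /fy /M_edge hx ltnNge hy /= mulr0.
  rewrite (@sum_ord2 R n (n - 2) _ (k%:R * t) (k%:R * (t - A))) //.
  + rewrite subKn //; rewrite /t in ht *; nra.
  + by move=> y hy; rewrite /fy /M_edge hx hy /= mulr1.
  + by move=> y hy; rewrite /fy /M_edge hx ltnNge hy /= mulr1.
rewrite bipY mxE bvecY /fy.
case: ifP => hy.
  rewrite (@sum_ord2 R n (n - k) _ (k%:R * (n - 2)%:R * r) ((t - A) * r)) //.
  + by rewrite subKn ?(ltnW kn) // /t /A; ring.
  + by move=> x hx; rewrite /fx /M_edge hx hy /= mulr1.
  + by move=> x hx; rewrite /fx /M_edge ltnNge hx hy /= mulr1.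
rewrite (@sum_ord2 R n (n - k) _ 0 ((t - A) * r)) //.
+ by rewrite subKn ?(ltnW kn) // /t /A; ring.
+ by move=> x hx; rewrite /fx /M_edge hx hy /= mulr0.
+ by move=> x hx; rewrite /fx /M_edge ltnNge hx hy /= mulr1.
Qed.


Lemma M_sumX (n k : nat) (fy : 'I_n -> R) d1 d2 : (2 <= k)%N -> (k < n)%N ->
  (forall y : 'I_n, fy y = if (y < n - 2)%N then d1 else d2) ->
  forall x : 'I_n, \sum_y fy y * (M_edge (n - k) 2 x y)%:R =
    if (x < n - k)%N then (n - 2)%:R * d1 else (n - 2)%:R * d1 + 2 * d2.
Proof.
move=> k2 kn fE x.
have nn2 : (n - 2 <= n)%N := leq_subr 2 n.
have e : (n - (n - 2))%N = 2%N by lia.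
case: ifP => hx.
  rewrite (@sum_ord2 R n (n - 2) _ d1 0) //.
  + by rewrite mulr0 addr0.
  + by move=> y hy; rewrite fE /M_edge hx hy /= mulr1.
  + by move=> y hy; rewrite /M_edge hx ltnNge hy /= mulr0.
rewrite (@sum_ord2 R n (n - 2) _ d1 d2) // ?e //.
+ by move=> y hy; rewrite fE /M_edge hx hy /= mulr1.
+ by move=> y hy; rewrite fE /M_edge hx ltnNge hy /= mulr1.
Qed.

Lemma M_sumY (n k : nat) (fx : 'I_n -> R) c1 c2 : (2 <= k)%N -> (k < n)%N ->
  (forall x : 'I_n, fx x = if (x < n - k)%N then c1 else c2) ->
  forall y : 'I_n, \sum_x fx x * (M_edge (n - k) 2 x y)%:R =
    if (y < n - 2)%N then (n - k)%:R * c1 + k%:R * c2 else k%:R * c2.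
Proof.
move=> k2 kn fE y.
have nk : (n - k <= n)%N := leq_subr k n.
have e : (n - (n - k))%N = k by lia.
case: ifP => hy.
  rewrite (@sum_ord2 R n (n - k) _ c1 c2) // ?e //.
  + by move=> x hx; rewrite fE /M_edge hx hy /= mulr1.
  + by move=> x hx; rewrite fE /M_edge ltnNge hx hy /= mulr1.
rewrite (@sum_ord2 R n (n - k) _ 0 c2) // ?e ?mulr0 ?add0r //.
+ by move=> x hx; rewrite /M_edge hx hy /= mulr0.
+ by move=> x hx; rewrite fE /M_edge ltnNge hx hy /= mulr1.
Qed.

Lemma M_lap_eig (n k : nat) (q : R) : (2 <= k)%N -> (k < n)%N ->
  q ^+ 2 - (2 * n%:R + k%:R - 2) * q + 2 * k%:R * (n%:R - 2) = 0 ->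
  n%:R + k%:R < q -> 2 * n%:R - 2 < q ->
  largest_eigenvalue (signless_lap (M_graph R n n (n - k) 2)) q.
Proof.
move=> k2 kn hq q1 q2.
have mE : (n - k)%:R = n%:R - k%:R :> R by rewrite natrB // ltnW.
have n2E : (n - 2)%:R = n%:R - 2 :> R by rewrite natrB //; lia.
have mpos : 0 < n%:R - k%:R :> R by rewrite subr_gt0 ltr_nat.
pose fx := fun x : 'I_n => if (x < n - k)%N then 2 * (q - n%:R - k%:R) else 2 * (n%:R - k%:R).
pose fy := fun y : 'I_n => if (y < n - 2)%N then 2 * (n%:R - k%:R) else (n%:R - k%:R) * (q - 2 * n%:R + 2).
apply: (@perron R _ _ (bvec fx fy) _ (lshift n (Ordinal (leq_ltn_trans (leq0n k) kn)))).
- exact/lap_sym/bip_sym.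
- exact/lap_ge0/bip_ge0.
- apply: bvec_pos => i.
    by rewrite /fx; case: ifP => _; apply: mulr_gt0; lra.
  by rewrite /fy; case: ifP => _; apply: mulr_gt0; lra.
apply: lap_eigvec => [x|y].
  rewrite (eq_bigr (fun y => (fun _ => 1) y * (M_edge (n - k) 2 x y)%:R)); last by move=> u _; rewrite mul1r.
  have h1 := @M_sumX n k (fun _ => 1) 1 1 k2 kn (fun i => esym (if_same _ _)) x.
  have h2 := @M_sumX n k fy (2 * (n%:R - k%:R)) ((n%:R - k%:R) * (q - 2 * n%:R + 2)) k2 kn (fun i => erefl) x.
  rewrite h1 h2 /fx n2E; case: ifP => _; nra.
rewrite (eq_bigr (fun x => (fun _ => 1) x * (M_edge (n - k) 2 x y)%:R)); last by move=> u _; rewrite mul1r.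
have h1 := @M_sumY n k (fun _ => 1) 1 1 k2 kn (fun i => esym (if_same _ _)) y.
have h2 := @M_sumY n k fx (2 * (q - n%:R - k%:R)) (2 * (n%:R - k%:R)) k2 kn (fun i => erefl) y.
rewrite h1 h2 /fy mE; case: ifP => _; nra.
Qed.

End G4.


Section G5.
Variable R : realType.

Lemma Npart1 n k (i : nat) : (2 <= k)%N -> (i < n - k)%N -> N_part n (k - 2) i = 1%N.
Proof. by move=> k2 h; rewrite /N_part ifT //; lia. Qed.
Lemma Npart2 n k (i : nat) : (2 <= k)%N -> (n - k <= i)%N -> (i < n - 1)%N -> N_part n (k - 2) i = 2%N.
Proof. by move=> k2 h h'; rewrite /N_part ifF ?h' //; lia. Qed.
Lemma Npart3 n k (i : nat) : (2 <= k)%N -> (n - 1 <= i)%N -> N_part n (k - 2) i = 3%N.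
Proof. by move=> k2 h; rewrite /N_part ifF ?ifF //; lia. Qed.

Lemma N_edge_sym n q (x y : 'I_n) : N_edge q x y = N_edge q y x.
Proof.
rewrite /N_edge; case: (N_part n q x) => [|[|[|[|?]]]]; case: (N_part n q y) => [|[|[|[|?]]]] //.
Qed.


Lemma N_sum (n k : nat) (f : 'I_n -> R) c1 c2 c3 : (2 <= k)%N -> (k < n)%N ->
  (forall i : 'I_n, f i = if (i < n - k)%N then c1 else if (i < n - 1)%N then c2 else c3) ->
  forall z : 'I_n, \sum_u f u * (N_edge (k - 2) z u)%:R =
    if (z < n - k)%N then (n - k)%:R * c1 + (k - 1)%:R * c2
    else if (z < n - 1)%N then (n - k)%:R * c1 + (k - 1)%:R * c2 + c3
    else (k - 1)%:R * c2 + c3.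
Proof.
move=> k2 kn fE z.
have ab : (n - k <= n - 1)%N by lia.
have bn : (n - 1 <= n)%N by lia.
have e1 : (n - 1 - (n - k))%N = (k - 1)%N by lia.
have e2 : (n - (n - 1))%N = 1%N by lia.
case: (ltnP z (n - k)) => h1.
  rewrite (@sum_ord3 R n (n - k) (n - 1) _ c1 c2 0) //.
  - by rewrite e1 e2 mulr0 addr0.
  - by move=> y hy; rewrite fE hy /N_edge (Npart1 _ _ _ k2 h1) (Npart1 _ _ _ k2 hy) /= mulr1.
  - move=> y hy hy'; rewrite fE ltnNge hy /= hy'.
    by rewrite /N_edge (Npart1 _ _ _ k2 h1) (Npart2 _ _ _ k2 hy hy') /= mulr1.
  - move=> y hy; rewrite /N_edge (Npart1 _ _ _ k2 h1) (Npart3 _ _ _ k2 hy) /= mulr0 //.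
case: (ltnP z (n - 1)) => h2.
  rewrite (@sum_ord3 R n (n - k) (n - 1) _ c1 c2 c3) //.
  - by rewrite e1 e2 mul1r.
  - by move=> y hy; rewrite fE hy /N_edge (Npart2 _ _ _ k2 h1 h2) (Npart1 _ _ _ k2 hy) /= mulr1.
  - move=> y hy hy'; rewrite fE ltnNge hy /= hy'.
    by rewrite /N_edge (Npart2 _ _ _ k2 h1 h2) (Npart2 _ _ _ k2 hy hy') /= mulr1.
  - move=> y hy; rewrite fE ltnNge (leq_trans ab hy) /= ltnNge hy /=.
    by rewrite /N_edge (Npart2 _ _ _ k2 h1 h2) (Npart3 _ _ _ k2 hy) /= mulr1.
rewrite (@sum_ord3 R n (n - k) (n - 1) _ 0 c2 c3) //.
- by rewrite e1 e2 mulr0 add0r mul1r.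
- by move=> y hy; rewrite /N_edge (Npart3 _ _ _ k2 h2) (Npart1 _ _ _ k2 hy) /= mulr0.
- move=> y hy hy'; rewrite fE ltnNge hy /= hy'.
  by rewrite /N_edge (Npart3 _ _ _ k2 h2) (Npart2 _ _ _ k2 hy hy') /= mulr1.
- move=> y hy; rewrite fE ltnNge (leq_trans ab hy) /= ltnNge hy /=.
  by rewrite /N_edge (Npart3 _ _ _ k2 h2) (Npart3 _ _ _ k2 hy) /= mulr1.
Qed.

Lemma N_sum1 (n k : nat) : (2 <= k)%N -> (k < n)%N ->
  forall z : 'I_n, \sum_u (N_edge (k - 2) z u)%:R =
    if (z < n - k)%N then (n - k)%:R + (k - 1)%:R :> R
    else if (z < n - 1)%N then (n - k)%:R + (k - 1)%:R + 1
    else (k - 1)%:R + 1.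
Proof.
move=> k2 kn z.
rewrite (eq_bigr (fun u => (fun _ => 1) u * (N_edge (k - 2) z u)%:R)); last by move=> u _; rewrite mul1r.
by rewrite (@N_sum n k _ 1 1 1) // ?mulr1 // => i; case: ifP => //; case: ifP.
Qed.

Lemma N_adj_eig (n k : nat) (r : R) : (2 <= k)%N -> (k < n)%N ->
  let m := (n - k)%:R in let j := (k - 1)%:R in
  r ^+ 3 - n%:R * r ^+ 2 + m * r + j * m = 0 -> m < r -> 1 < r ->
  largest_eigenvalue (N_graph R n (k - 2)) r.
Proof.
move=> k2 kn m j hP mr r1.
have nE : n%:R = m + j + 1 :> R.
  have H : n = ((n - k) + (k - 1) + 1)%N by lia.
  by rewrite {1}H !natrD.
have jpos : 0 < j by rewrite ltr0n; lia.
pose f := fun i : 'I_n => if (i < n - k)%N then j * (r - 1)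
       else if (i < n - 1)%N then (r - m) * (r - 1) else j * (r - m).
have fpos : forall i, 0 < f i.
  move=> i; rewrite /f; case: ifP => _; last case: ifP => _.
  - by rewrite mulr_gt0 // subr_gt0.
  - by rewrite mulr_gt0 // subr_gt0.
  - by rewrite mulr_gt0 // subr_gt0.
have key : forall z : 'I_n, \sum_u f u * (N_edge (k - 2) z u)%:R = r * f z.
  move=> z; rewrite (@N_sum n k f (j * (r - 1)) ((r - m) * (r - 1)) (j * (r - m))) //.
  rewrite -/m -/j /f; rewrite nE in hP.
  case: ifP => _; last case: ifP => _; nra.
apply: (@perron R _ _ (bvec f f) _ (lshift n (Ordinal (leq_ltn_trans (leq0n k) kn)))).
- exact: bip_sym.
- exact: bip_ge0.
- exact: bvec_pos.
apply: bip_eigvec => // y.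
rewrite -key; apply: eq_bigr => x _; by rewrite N_edge_sym.
Qed.

Lemma N_lap_eig (n k : nat) (q : R) : (2 <= k)%N -> (k < n)%N ->
  let m := (n - k)%:R in let j := (k - 1)%:R in
  (q - n%:R - j) * (q - 2 * n%:R + k%:R + 1) * (q - k%:R - 1)
    - m * j * (q - k%:R - 1) - j * (q - 2 * n%:R + k%:R + 1) = 0 ->
  2 * n%:R - k%:R - 1 < q -> k%:R + 1 < q ->
  largest_eigenvalue (signless_lap (N_graph R n (k - 2))) q.
Proof.
move=> k2 kn m j hP q1 q2.
have nE : n%:R = m + j + 1 :> R.
  have H : n = ((n - k) + (k - 1) + 1)%N by lia.
  by rewrite {1}H !natrD.
have kE : k%:R = j + 1 :> R.
  have H : k = ((k - 1) + 1)%N by lia.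
  by rewrite {1}H !natrD.
have jpos : 0 < j by rewrite ltr0n; lia.
pose f := fun i : 'I_n => if (i < n - k)%N then j * (q - k%:R - 1)
       else if (i < n - 1)%N then (q - 2 * n%:R + k%:R + 1) * (q - k%:R - 1)
       else j * (q - 2 * n%:R + k%:R + 1).
have fpos : forall i, 0 < f i.
  move=> i; rewrite /f; case: ifP => _; last case: ifP => _.
  - by apply: mulr_gt0; lra.
  - by apply: mulr_gt0; lra.
  - by apply: mulr_gt0; lra.
have key : forall z : 'I_n, f z * \sum_u (N_edge (k - 2) z u)%:R +
    \sum_u f u * (N_edge (k - 2) z u)%:R = q * f z.
  move=> z; rewrite (@N_sum n k f (j * (q - k%:R - 1))
     ((q - 2 * n%:R + k%:R + 1) * (q - k%:R - 1)) (j * (q - 2 * n%:R + k%:R + 1))) //.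
  rewrite N_sum1 // -/m -/j /f; rewrite nE kE in hP *.
  case: ifP => _; last case: ifP => _; nra.
apply: (@perron R _ _ (bvec f f) _ (lshift n (Ordinal (leq_ltn_trans (leq0n k) kn)))).
- exact/lap_sym/bip_sym.
- exact/lap_ge0/bip_ge0.
- exact: bvec_pos.
apply: lap_eigvec => // y.
rewrite -key; congr (_ * _ + _); apply: eq_bigr => x _; by rewrite N_edge_sym.
Qed.

End G5.

Lemma poly_root_between (R : realType) (p : {poly R}) (a b : R) :
  a <= b -> p.[a] <= 0 -> 0 <= p.[b] -> exists c, [/\ a <= c, c <= b & p.[c] = 0].
Proof.
move=> ab pa pb.
have hm : Num.min p.[a] p.[b] <= 0 <= Num.max p.[a] p.[b].
  by rewrite ge_min pa /= le_max pb orbT.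
have [|c cab pc] := @IVT R (horner p) a b 0 ab _ hm.
  by apply/continuous_subspaceT => ?; exact: continuous_horner.
by exists c; move: cab; rewrite in_itv /= => /andP[-> ->].
Qed.

Lemma poly_root_open (R : realType) (p : {poly R}) (a b : R) :
  a <= b -> p.[a] < 0 -> 0 < p.[b] -> exists c, [/\ a < c, c < b & p.[c] = 0].
Proof.
move=> ab pa pb.
have [c [h1 h2 h3]] := @poly_root_between R p a b ab (ltW pa) (ltW pb).
exists c; split => //.
  by rewrite lt_neqAle h1 andbT; apply/eqP => ac; move: pa; rewrite ac h3 ltxx.
by rewrite lt_neqAle h2 andbT; apply/eqP => cb; move: pb; rewrite -cb h3 ltxx.
Qed.


Lemma part1 (R : realType) :
  (forall k n : nat, (2 <= k)%N -> (2 * k ^ 2 + 3 <= n)%N ->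
     exists rhoN rhoM : R,
       [/\ largest_eigenvalue (N_graph R n (k - 2)) rhoN,
           largest_eigenvalue (M_graph R n n (n - k) 2) rhoM &
           rhoM < rhoN]).
Proof.
move=> k n k2 hn.
have kn : (k < n)%N by nia.
have n3k : (3 * k < n)%N by nia.
have mE : (n - k)%:R = n%:R - k%:R :> R by rewrite natrB // ltnW.
have n2E : (n - 2)%:R = n%:R - 2 :> R by rewrite natrB //; lia.
have jE : (k - 1)%:R = k%:R - 1 :> R by rewrite natrB //; lia.
have kR2 : 2 <= k%:R :> R by rewrite (ler_nat R 2 k).
have nR3k : 3 * k%:R < n%:R :> R by rewrite -natrM ltr_nat.
set nR := n%:R in mE n2E nR3k *; set kR := k%:R in mE n2E jE kR2 nR3k *.
pose A := (nR - kR) * (nR - 2).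
pose pM : {poly R} := ('X * 'X - A%:P) * ('X * 'X - (2 * kR)%:P) - (kR * (nR - 2))%:P * 'X * 'X.
have hpM x : pM.[x] = (x * x - A) * (x * x - 2 * kR) - kR * (nR - 2) * x * x.
  by rewrite /pM !hornerE.
have nR3 : 3 <= nR - 2 + 1 by lra.
have hM1 : pM.[nR - 2] < 0.
  rewrite hpM /A.
  have -> : ((nR - 2) * (nR - 2) - (nR - kR) * (nR - 2)) * ((nR - 2) * (nR - 2) - 2 * kR) -
     kR * (nR - 2) * (nR - 2) * (nR - 2) =
     - 2 * ((nR - 2) * ((nR - 2) * (nR - 2))) - 2 * (kR * (kR - 2) * (nR - 2)) by ring.
  have u0 : 0 < nR - 2 by lra.
  have : 0 < (nR - 2) * ((nR - 2) * (nR - 2)) by rewrite !mulr_gt0.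
  have : 0 <= kR * (kR - 2) * (nR - 2) by rewrite !mulr_ge0 //; lra.
  lra.
have hM2 : 0 < pM.[nR].
  rewrite hpM /A.
  have -> : (nR * nR - (nR - kR) * (nR - 2)) * (nR * nR - 2 * kR) - kR * (nR - 2) * nR * nR =
    2 * nR * (nR * nR - kR * kR - 2 * kR) + 4 * (kR * kR) by ring.
  have h1 : 0 <= nR * nR - kR * kR - 2 * kR by nra.
  have : 0 <= 2 * nR * (nR * nR - kR * kR - 2 * kR) by rewrite !mulr_ge0 //; lra.
  have : 0 < kR * kR by nra.
  lra.
have [c [c1 c2 c3]] := @poly_root_open R pM (nR - 2) nR (ltac:(lra)) hM1 hM2.
rewrite hpM in c3.
have c0 : 0 < c by lra.
have At : A < c ^+ 2.
  have h1 : A <= c * c by rewrite /A; nra.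
  rewrite expr2 lt_neqAle h1 andbT; apply/eqP => hA.
  have e : c * c - A = 0 by rewrite hA subrr.
  rewrite e mul0r sub0r in c3.
  have pos : 0 < kR * (nR - 2) * c * c by rewrite !mulr_gt0 //; lra.
  lra.
have hMeig : largest_eigenvalue (M_graph R n n (n - k) 2) c.
  apply: M_adj_eig => //.
    by rewrite mE n2E -/A expr2; apply/eqP; rewrite -subr_eq0; apply/eqP; rewrite -c3; ring.
  by rewrite mE n2E -/A.
pose m := nR - kR. pose j := kR - 1.
pose pN : {poly R} := 'X * 'X * 'X - nR%:P * 'X * 'X + m%:P * 'X + (j * m)%:P.
have hpN x : pN.[x] = x * x * x - nR * x * x + m * x + j * m.
  by rewrite /pN !hornerE.
have mpos : 1 <= m by rewrite /m; lra.
have jpos : 1 <= j by rewrite /j; lra.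
have key : pN.[c] < 0.
  rewrite hpN; set t := c * c.
  have tm : m < t.
    have : m <= m * (nR - 2) by nra.
    by move: At; rewrite expr2 /A -/m /t; lra.
  have ntj : 0 < nR * t - j * m.
    have : j * m < nR * m by rewrite /j; nra.
    nra.
  rewrite ltNge; apply/negP => H.
  have H1 : nR * t - j * m <= c * (t + m) by rewrite /t in H *; nra.
  have H2 : (nR * t - j * m) ^+ 2 <= (c * (t + m)) ^+ 2.
    by rewrite ler_pXn2r // ?nnegrE; lra.
  have id : (c * (t + m)) ^+ 2 - (nR * t - j * m) ^+ 2 =
      t * ((t - A) * (t - 2 * kR) - kR * (nR - 2) * t) + m * (3 * kR - nR) * t - j * j * (m * m).
    by rewrite /t /A /m /j; ring.
  have e0 : (t - A) * (t - 2 * kR) - kR * (nR - 2) * t = 0.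
    by rewrite /t -c3; ring.
  rewrite e0 mulr0 add0r in id.
  have : m * (3 * kR - nR) * t < 0.
    rewrite -mulrA pmulr_rlt0; last lra.
    by rewrite pmulr_llt0 ?subr_lt0 // /t; nra.
  have : 0 <= j * j * (m * m) by nra.
  lra.
have hN2 : 0 < pN.[nR] by rewrite hpN; nra.
have [r [r1 r2 r3]] := @poly_root_open R pN c nR (ltW c2) key hN2.
rewrite hpN in r3.
have cm : m < c.
  have h0 : m <= nR - 2 by rewrite /m; lra.
  have h1 : m * m <= m * (nR - 2) by rewrite ler_pM2l; lra.
  move: At; rewrite expr2 /A -/m => At.
  rewrite ltNge; apply/negP => H.
  have : c * c <= m * m by apply: ler_pM; lra.
  lra.
exists r, c; split => //.
apply: N_adj_eig => //.
- by rewrite mE jE -/m -/j -r3 -/nR; ring.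
- by rewrite mE -/m; lra.
- lra.
Qed.


Lemma part2 (R : realType) :
  (forall k n : nat, (2 <= k)%N -> (k + 1 <= n)%N ->
     exists qM qN : R,
       [/\ largest_eigenvalue (signless_lap (M_graph R n n (n - k) 2)) qM,
           largest_eigenvalue (signless_lap (N_graph R n (k - 2))) qN &
           qN < qM]).
Proof.
move=> k n k2 hn.
have kn : (k < n)%N by lia.
have mE : (n - k)%:R = n%:R - k%:R :> R by rewrite natrB // ltnW.
have jE : (k - 1)%:R = k%:R - 1 :> R by rewrite natrB //; lia.
have kR2 : 2 <= k%:R :> R by rewrite (ler_nat R 2 k).
have nRk : k%:R + 1 <= n%:R :> R by rewrite natr1 ler_nat.
set nR := n%:R in mE nRk *; set kR := k%:R in mE jE kR2 nRk *.
pose f : {poly R} := 'X * 'X - (2 * nR + kR - 2)%:P * 'X + (2 * kR * (nR - 2))%:P.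
have hf x : f.[x] = x * x - (2 * nR + kR - 2) * x + 2 * kR * (nR - 2).
  by rewrite /f !hornerE.
have hf1 : f.[nR + kR] < 0.
  rewrite hf.
  have -> : (nR + kR) * (nR + kR) - (2 * nR + kR - 2) * (nR + kR) + 2 * kR * (nR - 2)
    = - ((nR - kR) * (nR - 2)) by ring.
  by rewrite oppr_lt0 mulr_gt0 //; lra.
have hf2 : 0 < f.[2 * nR + kR - 2].
  rewrite hf.
  have -> : (2 * nR + kR - 2) * (2 * nR + kR - 2) - (2 * nR + kR - 2) * (2 * nR + kR - 2) +
    2 * kR * (nR - 2) = 2 * kR * (nR - 2) by ring.
  by rewrite !mulr_gt0 //; lra.
have [c [c1 c2 c3]] := @poly_root_open R f (nR + kR) (2 * nR + kR - 2) (ltac:(lra)) hf1 hf2.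
rewrite hf in c3.
have c4 : 2 * nR - 2 < c.
  rewrite ltNge; apply/negP => H.
  have e : c * c - (2 * nR + kR - 2) * c + 2 * kR * (nR - 2) = (c - kR) * (c - 2 * nR + 2) - 2 * kR by ring.
  have h : (c - kR) * (c - 2 * nR + 2) <= 0 by rewrite pmulr_rle0; lra.
  lra.
have hM : largest_eigenvalue (signless_lap (M_graph R n n (n - k) 2)) c.
  by apply: M_lap_eig => //; rewrite -/nR -/kR ?expr2; lra.
pose m := nR - kR. pose j := kR - 1.
pose pN : {poly R} := ('X - (nR + j)%:P) * ('X - (2 * nR - kR - 1)%:P) * ('X - (kR + 1)%:P)
   - (m * j)%:P * ('X - (kR + 1)%:P) - j%:P * ('X - (2 * nR - kR - 1)%:P).
have hpN x : pN.[x] = (x - (nR + j)) * (x - (2 * nR - kR - 1)) * (x - (kR + 1))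
   - (m * j) * (x - (kR + 1)) - j * (x - (2 * nR - kR - 1)).
  by rewrite /pN !hornerE.
have idN x : pN.[x] = (x - nR - 1) * (x * x - (2 * nR + kR - 2) * x + 2 * kR * (nR - 2))
   + (m + 2) * x - 2 * (nR * nR - nR * kR + 2 * kR).
  by rewrite hpN /m /j; ring.
have keyc : 0 < pN.[c].
  rewrite idN c3 mulr0 add0r.
  have [e|e] : n = k.+1 \/ (k.+2 <= n)%N by lia.
    have eR : nR = kR + 1 by rewrite /nR /kR e -natr1.
    rewrite /m eR; rewrite eR in c1; lra.
  have eR : kR + 2 <= nR by rewrite /nR /kR -natrD ler_nat; lia.
  have h : 0 < (m + 2) * (c - (2 * nR - 2)) by rewrite mulr_gt0 // /m; lra.
  have -> : (m + 2) * c - 2 * (nR * nR - nR * kR + 2 * kR) =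
     (m + 2) * (c - (2 * nR - 2)) + 2 * (nR - kR - 2) by rewrite /m; ring.
  lra.
have mpos : 1 <= m by rewrite /m; lra.
have jpos : 1 <= j by rewrite /j; lra.
have [lowN [l1 l2 l3 l4]] : exists lowN, [/\ pN.[lowN] < 0, lowN <= c,
    2 * nR - kR - 1 <= lowN & kR + 1 <= lowN].
  have [e|e] : (n <= 2 * k)%N \/ (2 * k < n)%N by lia.
    have eR : nR <= 2 * kR by rewrite /nR /kR -natrM ler_nat; lia.
    exists (nR + kR - 1); split; try lra.
    rewrite hpN.
    have -> : (nR + kR - 1 - (nR + j)) * (nR + kR - 1 - (2 * nR - kR - 1)) * (nR + kR - 1 - (kR + 1)) -
      m * j * (nR + kR - 1 - (kR + 1)) - j * (nR + kR - 1 - (2 * nR - kR - 1))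
      = - (j * (m * (nR - 2) + (2 * kR - nR))) by rewrite /j /m; ring.
    rewrite oppr_lt0 mulr_gt0 //; first lra.
    have : 1 <= m * (nR - 2) by rewrite -[1]mul1r; apply: ler_pM; lra.
    lra.
  have eR : 2 * kR + 1 <= nR by rewrite /nR /kR -natrM natr1 ler_nat; lia.
  exists (2 * nR - kR - 1); split; try lra.
  rewrite hpN.
  have -> : (2 * nR - kR - 1 - (nR + j)) * (2 * nR - kR - 1 - (2 * nR - kR - 1)) * (2 * nR - kR - 1 - (kR + 1)) -
      m * j * (2 * nR - kR - 1 - (kR + 1)) - j * (2 * nR - kR - 1 - (2 * nR - kR - 1))
      = - (m * j * (2 * (nR - kR - 1))) by rewrite /j /m; ring.
  by rewrite oppr_lt0 !mulr_gt0 //; lra.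
have [r [r1 r2 r3]] := @poly_root_open R pN lowN c l2 l1 keyc.
rewrite hpN in r3.
exists c, r; split => //.
apply: N_lap_eig => //.
- by rewrite mE jE -/nR -/kR -r3 /m /j; ring.
- by rewrite -/nR -/kR; lra.
- by rewrite -/kR; lra.
Qed.

Theorem lemma4p1 (R : realType) :
  (forall k n : nat, (2 <= k)%N -> (2 * k ^ 2 + 3 <= n)%N ->
     exists rhoN rhoM : R,
       [/\ largest_eigenvalue (N_graph R n (k - 2)) rhoN,
           largest_eigenvalue (M_graph R n n (n - k) 2) rhoM &
           rhoM < rhoN])
  /\
  (forall k n : nat, (2 <= k)%N -> (k + 1 <= n)%N ->
     exists qM qN : R,
       [/\ largest_eigenvalue (signless_lap (M_graph R n n (n - k) 2)) qM,
           largest_eigenvalue (signless_lap (N_graph R n (k - 2))) qN &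
           qN < qM]).
Proof. split; [exact: part1 | exact: part2]. Qed.
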